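(* Let $M$ be a pointed metric space which is not both bounded and uniformly discrete (i.e. $M$ is unbounded or $\inf\{d(x,y):x,y\in M,\ x\neq y\}=0$). Then $\mathcal F(M)\widehat{\otimes}_\pi X$ is octahedral for every non-zero Banach space $X$.
   Context: All Banach spaces are real. $\mathcal F(M)$ is the Lipschitz-free space over the pointed metric space $M$ (the closed linear span of the evaluation functionals $\delta_p$, $p\in M$, in $\mathrm{Lip}_0(M)^*$, where $\mathrm{Lip}_0(M)$ is the space of real Lipschitz functions vanishing at the base point with the Lipschitz-constant norm), and $\widehat{\otimes}_\pi$ is the projective tensor product. A metric space is uniformly discrete if $\inf\{d(x,y):x\neq y\}>0$. A Banach space $Z$ is octahedral if for every $x_1,\dots,x_n\in S_Z$ and $\varepsilon>0$ there is $y\in S_Z$ with $\|x_i-y\|\ge 2-\varepsilon$ for all $i=1,\dots,n$. *)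

(* Defs.v *)
From HB Require Import structures.
From mathcomp Require Import all_boot all_order all_algebra.
From mathcomp Require Import all_classical all_reals all_analysis.
Set Implicit Arguments. Unset Strict Implicit. Unset Printing Implicit Defensive.
Import Order.TTheory GRing.Theory Num.Theory.
Import numFieldNormedType.Exports.
Local Open Scope classical_set_scope.
Local Open Scope ring_scope.

Section Defs.
Variable R : realType.

Definition is_metric (M : Type) (d : M -> M -> R) : Prop :=
  [/\ forall x y, 0 <= d x y,
      forall x y, d x y = 0 <-> x = y,
      forall x y, d x y = d y x &
      forall x y z, d x z <= d x y + d y z].

Definition bounded_metric (M : Type) (d : M -> M -> R) : Prop :=
  exists C : R, forall x y, d x y <= C.

Definition uniformly_discrete (M : Type) (d : M -> M -> R) : Prop :=
  exists e : R, 0 < e /\ forall x y, x <> y -> e <= d x y.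

(* A finite formal sum  sum_k delta_{k.1} (x) k.2  is encoded as a list of
   pairs; coefficient of the point p. *)
Definition tcoef (M : Type) (V : zmodType) (u : seq (M * V)) (p : M) : V :=
  \sum_(k <- u) (if `[< k.1 = p >] then k.2 else 0).

(* Norm in F(M) (as an element of Lip_0(M)^* ) of sum_k k.2 delta_{k.1}. *)
Definition free_norm (M : Type) (d : M -> M -> R) (base : M)
    (mu : seq (M * R)) : R :=
  sup [set r | exists f : M -> R, f base = 0 /\
         (forall x y, `|f x - f y| <= d x y) /\
         r = \sum_(k <- mu) k.2 * f k.1].

(* Projective norm of the tensor sum_k delta_{k.1} (x) k.2 in
   span{delta_p} (x) X  ( = the algebraic tensor product, delta_base = 0 and
   the delta_p, p <> base, being linearly independent ):
   infimum of sum_i ||mu_i||_F ||x_i|| over all representations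
   u = sum_i mu_i (x) x_i with mu_i in span{delta_p}. *)
Definition proj_norm (M : Type) (d : M -> M -> R) (base : M)
    (X : normedModType R) (u : seq (M * X)) : R :=
  inf [set r | exists reps : seq (seq (M * R) * X),
         (forall p, p <> base ->
            tcoef u p = \sum_(i <- reps) (tcoef i.1 p) *: i.2) /\
         r = \sum_(i <- reps) free_norm d base i.1 * `|i.2|].

Definition tsub (M : Type) (X : zmodType) (u v : seq (M * X)) : seq (M * X) :=
  u ++ [seq (k.1, - k.2) | k <- v].

(* The completion F(M) ^(x)_pi X, realised as Cauchy sequences of elements of
   the dense subspace span{delta_p} (x) X; norms/distances are limits. *)
Section Completion.
Variables (T : Type) (sub : T -> T -> T) (nrm : T -> R).

Definition cauchy_seq (u : nat -> T) : Prop :=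
  forall e : R, 0 < e -> exists N : nat, forall m n : nat,
    (N <= m)%N -> (N <= n)%N -> nrm (sub (u m) (u n)) < e.

Definition cnorm (u : nat -> T) : R := limn (fun n => nrm (u n)).

Definition cdist (u v : nat -> T) : R := limn (fun n => nrm (sub (u n) (v n))).

Definition octahedral_completion : Prop :=
  forall (n : nat) (x : 'I_n -> nat -> T),
    (forall i, cauchy_seq (x i) /\ cnorm (x i) = 1) ->
    forall eps : R, 0 < eps ->
    exists y : nat -> T, [/\ cauchy_seq y, cnorm y = 1 &
      forall i, 2 - eps <= cdist (x i) y].
End Completion.

Definition octahedral_free_ptensor (M : Type) (d : M -> M -> R) (base : M)
    (X : normedModType R) : Prop :=
  octahedral_completion (@tsub M X) (@proj_norm M d base X).

End Defs.

(* Main.v *)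
Require Import Defs.
From HB Require Import structures.
From mathcomp Require Import all_boot all_order all_algebra.
From mathcomp Require Import all_classical all_reals all_analysis.
Import Order.TTheory GRing.Theory Num.Theory.
Import numFieldNormedType.Exports.
From mathcomp Require Import ring lra.
Local Open Scope classical_set_scope.
Local Open Scope ring_scope.
Set Implicit Arguments. Unset Strict Implicit. Unset Printing Implicit Defensive.


Section Basics.
Variables (R : realType) (M : Type).

Definition EV (V : lmodType R) (mu : seq (M * V)) (G : M -> R) : V :=
  \sum_(k <- mu) G k.1 *: k.2.

Lemma tcoef_nil (V : zmodType) p : tcoef (@nil (M * V)) p = 0.
Proof. by rewrite /tcoef big_nil. Qed.

Lemma tcoef_cons (V : zmodType) (k : M * V) mu p :
  tcoef (k :: mu) p = (if `[< k.1 = p >] then k.2 else 0) + tcoef mu p.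
Proof. by rewrite /tcoef big_cons. Qed.

Lemma tcoef_cat (V : zmodType) (mu nu : seq (M * V)) p :
  tcoef (mu ++ nu) p = tcoef mu p + tcoef nu p.
Proof. by rewrite /tcoef big_cat. Qed.

Lemma EV_nil (V : lmodType R) G : EV (@nil (M * V)) G = 0.
Proof. by rewrite /EV big_nil. Qed.

Lemma EV_cons (V : lmodType R) (k : M * V) mu G :
  EV (k :: mu) G = G k.1 *: k.2 + EV mu G.
Proof. by rewrite /EV big_cons. Qed.

Lemma EV_cat (V : lmodType R) (mu nu : seq (M * V)) G :
  EV (mu ++ nu) G = EV mu G + EV nu G.
Proof. by rewrite /EV big_cat. Qed.

Lemma EV_tcoef (V : lmodType R) (mu : seq (M * V)) G (T : seq {classic M}) :
  uniq T -> all (fun k => (k.1 : {classic M}) \in T) mu ->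
  EV mu G = \sum_(q <- T) G q *: tcoef mu q.
Proof.
move=> uT; elim: mu => [|k mu IH] H.
  by rewrite EV_nil; under eq_bigr do rewrite tcoef_nil scaler0; rewrite big1.
move: H => /= /andP[kT H].
rewrite EV_cons IH //.
under [in RHS]eq_bigr do rewrite tcoef_cons scalerDr.
rewrite big_split /=; congr (_ + _).
rewrite (bigD1_seq (k.1 : {classic M})) //=.
rewrite big1 ?addr0.
  by case: asboolP => // /(_ erefl).
move=> q qne; case: asboolP => e; last by rewrite scaler0.
by move: qne; rewrite -e eqxx.
Qed.

Section Norms.
Variables (d : M -> M -> R) (base : M).
Hypothesis Hd : is_metric d.

Definition adm (f : M -> R) := f base = 0 /\ (forall x y, `|f x - f y| <= d x y).
Definition fsum (mu : seq (M * R)) (f : M -> R) := \sum_(k <- mu) k.2 * f k.1.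

Lemma d_ge0 x y : 0 <= d x y. Proof. by case: Hd. Qed.
Lemma d_sym x y : d x y = d y x. Proof. by case: Hd. Qed.
Lemma d_tri x y z : d x z <= d x y + d y z. Proof. by case: Hd. Qed.
Lemma d_xx x : d x x = 0. Proof. by case: Hd => _ H _ _; apply: (proj2 (H _ _)). Qed.
Lemma d_eq0 x y : d x y = 0 -> x = y. Proof. by case: Hd => _ H _ _; apply: (proj1 (H _ _)). Qed.

Lemma adm_bound f x : adm f -> `|f x| <= d x base.
Proof. by case=> f0 fL; have := fL x base; rewrite f0 subr0. Qed.

Definition FS (mu : seq (M * R)) := [set r | exists f : M -> R, f base = 0 /\
         (forall x y, `|f x - f y| <= d x y) /\ r = fsum mu f].

Lemma FS_ub mu : has_ubound (FS mu).
Proof.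
exists (\sum_(k <- mu) `|k.2| * d k.1 base); move=> r [f [f0 [fL ->]]].
rewrite /fsum; apply: (le_trans (ler_norm _)); apply: (le_trans (ler_norm_sum _ _ _)).
apply: ler_sum => k _; rewrite normrM ler_wpM2l //; exact: adm_bound.
Qed.

Lemma FS_ne mu : FS mu !=set0.
Proof. by exists 0, (fun=> 0); split=> //; split=> [x y|]; rewrite ?subr0 ?normr0 ?d_ge0 // /fsum big1 // => k _; rewrite mulr0. Qed.

Lemma fn_ub mu f : adm f -> fsum mu f <= free_norm d base mu.
Proof. by case=> f0 fL; apply: ub_le_sup; [exact: FS_ub | exists f]. Qed.

Lemma fn_le mu C : (forall f, adm f -> fsum mu f <= C) -> free_norm d base mu <= C.
Proof. by move=> H; apply: ge_sup; [exact: FS_ne| move=> r [f [f0 [fL ->]]]; apply: H]. Qed.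

Lemma adm0 : adm (fun=> 0).
Proof. by split=> // x y; rewrite subr0 normr0 d_ge0. Qed.

Lemma fn_ge0 mu : 0 <= free_norm d base mu.
Proof.
have := fn_ub mu adm0; rewrite /fsum big1 // => k _; by rewrite mulr0.
Qed.

Lemma admN f : adm f -> adm (fun x => - f x).
Proof. by case=> f0 fL; split=> [|x y]; rewrite ?f0 ?oppr0 // -opprD normrN. Qed.

Lemma fsumN mu f : fsum mu (fun x => - f x) = - fsum mu f.
Proof. by rewrite /fsum -sumrN; apply: eq_bigr => k _; rewrite mulrN. Qed.

Lemma fn_abs mu f : adm f -> `|fsum mu f| <= free_norm d base mu.
Proof.
move=> af; rewrite ler_norml fn_ub // andbT lerNl -fsumN; exact/fn_ub/admN.
Qed.

Variable X : normedModType R.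

Definition rep_ok (u : seq (M * X)) (reps : seq (seq (M * R) * X)) :=
  forall p, p <> base -> tcoef u p = \sum_(i <- reps) (tcoef i.1 p) *: i.2.
Definition cost (reps : seq (seq (M * R) * X)) :=
  \sum_(i <- reps) free_norm d base i.1 * `|i.2|.

Lemma cost_ge0 reps : 0 <= cost reps.
Proof. by apply: sumr_ge0 => i _; rewrite mulr_ge0 ?fn_ge0. Qed.

Definition PS (u : seq (M * X)) := [set r | exists reps : seq (seq (M * R) * X),
         (forall p, p <> base ->
            tcoef u p = \sum_(i <- reps) (tcoef i.1 p) *: i.2) /\
         r = \sum_(i <- reps) free_norm d base i.1 * `|i.2|].

Definition canon (u : seq (M * X)) : seq (seq (M * R) * X) := [seq ([:: (k.1, 1 : R)], k.2) | k <- u].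

Lemma canon_ok u : rep_ok u (canon u).
Proof.
move=> p _; rewrite /canon big_map /tcoef; apply: eq_bigr => k _.
rewrite big_cons big_nil addr0 /=; case: asboolP => _; by rewrite ?scale1r ?scale0r.
Qed.

Lemma pn_le u reps : rep_ok u reps -> proj_norm d base u <= cost reps.
Proof.
move=> ok; apply: ge_inf; last by exists reps.
by exists 0 => r [rp [_ ->]]; apply: cost_ge0.
Qed.

Lemma pn_ge u C : (forall reps, rep_ok u reps -> C <= cost reps) -> C <= proj_norm d base u.
Proof.
move=> H; apply: lb_le_inf; first by exists (cost (canon u)), (canon u); split=> //; exact: canon_ok.
by move=> r [rp [ok ->]]; apply: H.
Qed.

Lemma pn_ge0 (u : seq (M * X)) : 0 <= proj_norm d base u.
Proof. by apply: pn_ge => reps _; apply: cost_ge0. Qed.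


Lemma fsum_EV (mu : seq (M * R)) G : fsum mu G = EV (mu : seq (M * R^o)) G.
Proof. by rewrite /fsum /EV; apply: eq_bigr => k _; rewrite mulrC. Qed.

Lemma fsum_tcoef (mu : seq (M * R)) G (T : seq {classic M}) :
  uniq T -> all (fun k => (k.1 : {classic M}) \in T) mu ->
  fsum mu G = \sum_(q <- T) G q * tcoef mu q.
Proof. by move=> uT H; rewrite fsum_EV (EV_tcoef _ uT H). Qed.

Lemma regroup_aux (reps : seq (seq (M * R) * X)) G (T : seq {classic M}) :
  uniq T -> all (fun i => all (fun k => (k.1 : {classic M}) \in T) i.1) reps ->
  \sum_(i <- reps) fsum i.1 G *: i.2 =
  \sum_(q <- T) G q *: \sum_(i <- reps) tcoef i.1 q *: i.2.
Proof.
move=> uT; elim: reps => [|i reps IH] /=.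
  by move=> _; rewrite big_nil big1 // => q _; rewrite big_nil scaler0.
move=> /andP[Hi H]; rewrite big_cons IH //.
under [in RHS]eq_bigr do rewrite big_cons scalerDr.
rewrite big_split /=; congr (_ + _).
rewrite (fsum_tcoef _ uT Hi) scaler_suml; apply: eq_bigr => q _.
by rewrite scalerA.
Qed.

Lemma regroup (w : seq (M * X)) reps G : G base = 0 -> rep_ok w reps ->
  EV w G = \sum_(i <- reps) fsum i.1 G *: i.2.
Proof.
move=> G0 ok.
set T : seq {classic M} := undup ([seq (k.1 : {classic M}) | k <- w] ++
   flatten [seq [seq (k.1 : {classic M}) | k <- i.1] | i <- reps]).
have uT : uniq T by apply: undup_uniq.
rewrite (regroup_aux G uT).
  rewrite (EV_tcoef _ uT); last first.
    apply/allP => k kw; rewrite mem_undup mem_cat; apply/orP; left.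
    by apply/mapP; exists k.
  apply: eq_bigr => q _.
  case: (asboolP (q = base)) => [->|qb]; first by rewrite G0 !scale0r.
  by rewrite ok.
have : forall x, x \in flatten [seq [seq (k.1 : {classic M}) | k <- i.1] | i <- reps] -> x \in T.
  by move=> x xin; rewrite mem_undup mem_cat xin orbT.
clearbody T; elim: reps {ok} => [//|i reps IH] /= H.
apply/andP; split.
  apply/allP => k ki; apply: H; rewrite mem_cat; apply/orP; left; by apply/mapP; exists k.
by apply: IH => x xin; apply: H; rewrite mem_cat xin orbT.
Qed.

Lemma adm_scale f c : adm f -> 0 <= c -> c <= 1 -> adm (fun x => c * f x).
Proof.
case=> f0 fL c0 c1; split=> [|x y]; first by rewrite f0 mulr0.
rewrite -mulrBr normrM ger0_norm //; apply: (le_trans (ler_wpM2l c0 (fL x y))).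
by rewrite ler_piMl ?d_ge0.
Qed.

Lemma pn_ge_EV (w : seq (M * X)) G : adm G -> `|EV w G| <= proj_norm d base w.
Proof.
move=> aG; apply: pn_ge => reps ok.
rewrite (regroup aG.1 ok); apply: (le_trans (ler_norm_sum _ _ _)).
rewrite /cost; apply: ler_sum => i _; rewrite normrZ ler_wpM2r //.
exact: fn_abs.
Qed.

Lemma fsumD mu F G : fsum mu (fun q => F q + G q) = fsum mu F + fsum mu G.
Proof. by rewrite /fsum -big_split; apply: eq_bigr => k _; rewrite mulrDr. Qed.

Lemma fsumZ mu c F : fsum mu (fun q => c * F q) = c * fsum mu F.
Proof. by rewrite /fsum mulr_sumr; apply: eq_bigr => k _; rewrite mulrCA. Qed.

Definition Pop (phi psi : M -> R) (z : M) (mu : seq (M * R)) : seq (M * R) :=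
  [seq (k.1, phi k.1 * k.2) | k <- mu] ++ [seq (z, psi k.1 * k.2) | k <- mu].

Lemma fsum_Pop phi psi z mu f :
  fsum (Pop phi psi z mu) f = fsum mu (fun q => phi q * f q + psi q * f z).
Proof.
rewrite /Pop /fsum big_cat !big_map /=.
under [RHS]eq_bigr do rewrite mulrDr.
rewrite big_split /=; congr (_ + _); apply: eq_bigr => k _; by rewrite mulrCA mulrA.
Qed.

Lemma tcoef_Pop phi psi z mu p :
  tcoef (Pop phi psi z mu) p =
  phi p * tcoef mu p + (if `[< z = p >] then fsum mu psi else 0).
Proof.
rewrite /Pop tcoef_cat /tcoef !big_map /=; congr (_ + _).
  rewrite mulr_sumr; apply: eq_bigr => k _; case: asboolP => [->|_]; by rewrite ?mulr0.
case: asboolP => _; last by rewrite big1.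
by rewrite /fsum; apply: eq_bigr => k _; rewrite mulrC.
Qed.

Lemma split_mu phi psi z g (del : R) mu : 0 <= del ->
  (forall f, adm f -> forall s : R, (s = 1 \/ s = -1) ->
     adm (fun q => (1 + del)^-1 * (phi q * f q + psi q * f z + s * g q))) ->
  free_norm d base (Pop phi psi z mu) + `|fsum mu g| <= (1 + del) * free_norm d base mu.
Proof.
move=> d0 HL; rewrite -lerBrDr; apply: fn_le => f af.
rewrite lerBrDr fsum_Pop.
have [s [s1 ->]] : exists s : R, (s = 1 \/ s = -1) /\ `|fsum mu g| = s * fsum mu g.
  case: (lerP 0 (fsum mu g)) => h.
    by exists 1; rewrite mul1r ger0_norm //; split=> //; left.
  by exists (-1); rewrite mulN1r ltr0_norm //; split=> //; right.
have := fn_ub mu (HL f af s s1); rewrite fsumZ.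
have dp : 0 < 1 + del by rewrite ltr_pwDl.
rewrite -(ler_pM2l dp) mulrA mulfV ?gt_eqF // mul1r.
by rewrite fsumD fsumD fsumZ.
Qed.

Lemma split_pn (u w : seq (M * X)) phi psi z g (del : R) : 0 <= del ->
  psi base = 0 -> g base = 0 ->
  (forall f, adm f -> forall s : R, (s = 1 \/ s = -1) ->
     adm (fun q => (1 + del)^-1 * (phi q * f q + psi q * f z + s * g q))) ->
  (forall p, p <> base ->
     tcoef u p = phi p *: tcoef w p + (if `[< z = p >] then EV w psi else 0)) ->
  proj_norm d base u + `|EV w g| <= (1 + del) * proj_norm d base w.
Proof.
move=> d0 psi0 g0 HL Hu.
have dp : 0 < 1 + del by rewrite ltr_pwDl.
rewrite -ler_pdivrMl //; apply: pn_ge => reps ok; rewrite ler_pdivrMl //.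
set reps' := [seq (Pop phi psi z i.1, i.2) | i <- reps].
have ok' : rep_ok u reps'.
  move=> p pb; rewrite Hu // big_map /=.
  under eq_bigr do rewrite tcoef_Pop scalerDl -scalerA.
  rewrite big_split /= -scaler_sumr -ok //; congr (_ + _).
  case: asboolP => _; last by rewrite big1 // => i _; rewrite scale0r.
  by rewrite (regroup psi0 ok).
apply: (le_trans (lerD (pn_le ok') (lexx _))).
rewrite (regroup g0 ok).
apply: (le_trans (lerD (lexx _) (ler_norm_sum _ _ _))).
rewrite /cost big_map /= -big_split /= mulr_sumr; apply: ler_sum => i _.
rewrite normrZ -mulrDl mulrA ler_wpM2r //.
exact: split_mu.
Qed.

Definition negl (u : seq (M * X)) := [seq (k.1, - k.2) | k <- u].

Lemma tcoef_negl u p : tcoef (negl u) p = - tcoef u p.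
Proof.
rewrite /tcoef big_map -sumrN; apply: eq_bigr => k _ /=.
by case: asboolP; rewrite ?oppr0.
Qed.

Lemma tcoef_tsub (u v : seq (M * X)) p : tcoef (tsub u v) p = tcoef u p - tcoef v p.
Proof. by rewrite /tsub tcoef_cat -/(negl v) tcoef_negl. Qed.

Lemma pn_ext (a b : seq (M * X)) : (forall p, p <> base -> tcoef a p = tcoef b p) ->
  proj_norm d base a = proj_norm d base b.
Proof.
move=> H; apply/eqP; rewrite eq_le; apply/andP; split.
  by apply: pn_ge => reps ok; apply: pn_le => p pb; rewrite H // ok.
by apply: pn_ge => reps ok; apply: pn_le => p pb; rewrite -H // ok.
Qed.

Lemma pn_cat (a b : seq (M * X)) :
  proj_norm d base (a ++ b) <= proj_norm d base a + proj_norm d base b.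
Proof.
rewrite -lerBlDr; apply: pn_ge => ra oka; rewrite lerBlDr addrC -lerBlDr.
apply: pn_ge => rb okb; rewrite lerBlDr.
have ok : rep_ok (a ++ b) (ra ++ rb).
  by move=> p pb; rewrite tcoef_cat big_cat /= oka // okb.
by apply: (le_trans (pn_le ok)); rewrite /cost big_cat /= addrC.
Qed.

Lemma pn_negl_le (a : seq (M * X)) : proj_norm d base (negl a) <= proj_norm d base a.
Proof.
apply: pn_ge => ra oka.
have ok : rep_ok (negl a) [seq (i.1, - i.2) | i <- ra].
  by move=> p pb; rewrite tcoef_negl oka // big_map -sumrN; apply: eq_bigr => i _; rewrite scalerN.
apply: (le_trans (pn_le ok)); rewrite /cost big_map le_eqVlt; apply/orP; left; apply/eqP.
by apply: eq_bigr => i _ /=; rewrite normrN.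
Qed.

Lemma pn_negl (a : seq (M * X)) : proj_norm d base (negl a) = proj_norm d base a.
Proof.
apply/eqP; rewrite eq_le pn_negl_le /=.
have -> : proj_norm d base a = proj_norm d base (negl (negl a)).
  by apply: pn_ext => p _; rewrite !tcoef_negl opprK.
exact: pn_negl_le.
Qed.

Lemma pn_tri (a b c : seq (M * X)) :
  proj_norm d base (tsub a c) <= proj_norm d base (tsub a b) + proj_norm d base (tsub b c).
Proof.
rewrite -(pn_ext (a := tsub a b ++ tsub b c)); first exact: pn_cat.
by move=> p _; rewrite tcoef_cat !tcoef_tsub addrA subrK.
Qed.

Lemma pn_subC (a b : seq (M * X)) :
  proj_norm d base (tsub a b) = proj_norm d base (tsub b a).
Proof.
rewrite -pn_negl; apply: pn_ext => p _.
by rewrite tcoef_negl !tcoef_tsub opprB.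
Qed.

Lemma pn_diff (a b : seq (M * X)) :
  proj_norm d base a <= proj_norm d base (tsub a b) + proj_norm d base b.
Proof.
rewrite -(pn_ext (a := tsub a b ++ b)); first exact: pn_cat.
by move=> p _; rewrite tcoef_cat !tcoef_tsub subrK.
Qed.

Lemma pn_absdiff (a b : seq (M * X)) :
  `|proj_norm d base a - proj_norm d base b| <= proj_norm d base (tsub a b).
Proof.
rewrite ler_norml; apply/andP; split.
  by rewrite lerNl opprB lerBlDr pn_subC; apply: pn_diff.
by rewrite lerBlDr pn_diff.
Qed.

Lemma pn_zero (a : seq (M * X)) : (forall p, p <> base -> tcoef a p = 0) ->
  proj_norm d base a = 0.
Proof.
move=> H; apply/eqP; rewrite eq_le pn_ge0 andbT.
have ok : rep_ok a [::] by move=> p pb; rewrite big_nil H.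
by apply: (le_trans (pn_le ok)); rewrite /cost big_nil.
Qed.

Lemma pn_self (a : seq (M * X)) : proj_norm d base (tsub a a) = 0.
Proof. by apply: pn_zero => p _; rewrite tcoef_tsub subrr. Qed.

Definition molv (x y : M) (e : X) : seq (M * X) :=
  [:: (x, (d x y)^-1 *: e); (y, - ((d x y)^-1 *: e))].

Lemma EV_tsub (u v : seq (M * X)) G : EV (tsub u v) G = EV u G - EV v G.
Proof.
rewrite /tsub EV_cat /EV big_map -sumrN; congr (_ + _); apply: eq_bigr => k _.
by rewrite scalerN.
Qed.

Lemma EV_molv x y e G : EV (molv x y e) G = ((G x - G y) / d x y) *: e.
Proof.
by rewrite /molv EV_cons EV_cons EV_nil addr0 /= scalerN -scalerBl scalerA mulrBl.
Qed.

Lemma molv_norm x y e : x <> y -> `|e| = 1 -> proj_norm d base (molv x y e) = 1.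
Proof.
move=> xy e1.
have dpos : 0 < d x y by rewrite lt_def d_ge0 andbT; apply/eqP => /d_eq0.
apply/eqP; rewrite eq_le; apply/andP; split.
  set mu : seq (M * R) := [:: (x, 1); (y, -1)].
  have ok : rep_ok (molv x y e) [:: (mu, (d x y)^-1 *: e)].
    move=> p _; rewrite big_cons big_nil addr0 /= /molv !tcoef_cons tcoef_nil /=.
    rewrite tcoef_nil.
    by case: (asboolP (x = p)) => _; case: (asboolP (y = p)) => _;
      rewrite ?addr0 ?add0r ?scalerDl ?scale1r ?scaleN1r ?scale0r.
  apply: (le_trans (pn_le ok)); rewrite /cost big_cons big_nil addr0 /=.
  rewrite normrZ e1 mulr1 ger0_norm ?invr_ge0 ?d_ge0 // -ler_pdivlMr ?invr_gt0 // invrK mul1r.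
  apply: fn_le => f [f0 fL]; rewrite /fsum big_cons big_cons big_nil /= addr0.
  by rewrite mul1r mulN1r; apply: (le_trans (ler_norm _)); apply: fL.
have aG : adm (fun q => d q y - d base y).
  split=> [|a b]; first by rewrite subrr.
  rewrite opprB addrA subrK ler_norml; apply/andP; split.
    rewrite lerNl opprB lerBlDr (d_sym a b). exact: (d_tri b a y).
  by rewrite lerBlDr; apply: d_tri.
apply: le_trans (pn_ge_EV _ aG).
rewrite EV_molv normrZ e1 mulr1 opprB addrA subrK d_xx subr0 mulfV ?gt_eqF //.
by rewrite normr1.
Qed.

Lemma EV_supp (P : M -> Prop) (mu : seq (M * X)) G z :
  all (fun k => `[< P k.1 >]) mu -> (forall s, P s -> s <> z -> G s = 0) ->
  EV mu G = G z *: tcoef mu z.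
Proof.
move=> Hall HG; elim: mu Hall => [|k mu IH] /=; first by rewrite EV_nil tcoef_nil scaler0.
move=> /andP[/asboolP Pk Hm]; rewrite EV_cons tcoef_cons scalerDr IH //; congr (_ + _).
case: asboolP => [<-//|kz]; by rewrite HG // scale0r scaler0.
Qed.

Lemma tcoef_supp (P : M -> Prop) (mu : seq (M * X)) p :
  all (fun k => `[< P k.1 >]) mu -> ~ P p -> tcoef mu p = 0.
Proof.
move=> Hall Pp; elim: mu Hall => [|k mu IH] /=; first by rewrite tcoef_nil.
move=> /andP[/asboolP Pk Hm]; rewrite tcoef_cons IH // addr0.
by case: asboolP => // E; exfalso; apply: Pp; rewrite -E.
Qed.

Lemma tcoef_molv x y e p : tcoef (molv x y e) p =
  (if `[< x = p >] then (d x y)^-1 *: e else 0) +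
  (if `[< y = p >] then - ((d x y)^-1 *: e) else 0).
Proof. by rewrite /molv !tcoef_cons tcoef_nil addr0. Qed.

Lemma key_gen (n : nat) (u : 'I_n -> seq (M * X)) (P : M -> Prop) phi g
   (x y z : M) e (del : R) :
  0 <= del -> del <= 1 -> `|e| = 1 -> x <> y ->
  P base -> (forall i, all (fun k => `[< P k.1 >]) (u i)) ->
  (forall s, P s -> s <> z -> phi s = 1) ->
  phi x = 0 -> (y <> base -> phi y = 0) -> (z <> base -> phi z = 0) ->
  ~ P x -> (P y -> y = z) ->
  (forall s, P s -> g s = 0) ->
  (1 - del) * d x y <= g x - g y ->
  (forall f, adm f -> forall s : R, (s = 1 \/ s = -1) ->
     adm (fun q => (1 + del)^-1 * (phi q * f q +
        (if `[< q = base >] then 0 else 1 - phi q) * f z + s * g q))) ->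
  forall i, proj_norm d base (u i) + (1 - del) <=
            (1 + del) * proj_norm d base (tsub (u i) (molv x y e)).
Proof.
move=> d0 d1 e1 xy Pb Hu phi1 phix phiy phiz nPx Pyz g0 gxy HL i.
set psi := fun q => if `[< q = base >] then 0 else 1 - phi q.
have dpos : 0 < d x y by rewrite lt_def d_ge0 andbT; apply/eqP => /d_eq0.
have xb : x <> base by move=> E; apply: nPx; rewrite E.
have psi0 : psi base = 0 by rewrite /psi; case: asboolP.
have Hsplit := @split_pn (u i) (tsub (u i) (molv x y e)) phi psi z g del d0 psi0
  (g0 _ Pb) HL.
apply: le_trans (Hsplit _); last first.
  move=> p pb; rewrite tcoef_tsub tcoef_molv.
  case: (asboolP (z = p)) => [zp|zp].
    subst p; rewrite phiz // scale0r add0r EV_tsub EV_molv.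
    rewrite (EV_supp (P := P) (z := z) (Hu i)); last first.
      move=> s Ps sz; rewrite /psi; case: asboolP => // _; by rewrite phi1 // subrr.
    have yb : y <> base by move=> E; apply: pb; rewrite -Pyz // E.
    rewrite /psi; case: asboolP => // _; case: asboolP => // _; case: asboolP => // _.
    by rewrite phiz // phix phiy // subr0 subrr mul0r scale0r subr0 scale1r.
  rewrite addr0.
  case: (asboolP (P p)) => [Pp|nPp].
    rewrite phi1; last by move=> E; apply: zp.
      rewrite scale1r; case: asboolP => [E|_]; first by exfalso; apply: nPx; rewrite E.
      case: asboolP => [E|_]; first by exfalso; apply: zp; rewrite -Pyz E.
      by rewrite addr0 subr0.
    by [].
  rewrite (tcoef_supp (Hu i) nPp) sub0r.
  case: asboolP => [E|_]; first by rewrite -E phix scale0r.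
  case: asboolP => [E|_]; first by rewrite -E phiy ?scale0r // E.
  by rewrite addr0 oppr0 scaler0.
apply: lerD => //.
rewrite EV_tsub (EV_supp (P := P) (z := z) (Hu i)); last by move=> s Ps _; apply: g0.
have -> : g z *: tcoef (u i) z = 0.
  case: (asboolP (P z)) => [Pz|nPz]; first by rewrite (g0 _ Pz) scale0r.
  by rewrite (tcoef_supp (Hu i) nPz) scaler0.
rewrite sub0r normrN EV_molv normrZ e1 mulr1.
rewrite ger0_norm; first by rewrite ler_pdivlMr.
apply: divr_ge0; last exact: d_ge0.
apply: le_trans gxy; apply: mulr_ge0 (d_ge0 _ _).
by rewrite subr_ge0.
Qed.
End Norms.
End Basics.

Lemma real_cauchy_cvg (R : realType) (a : nat -> R) :
  (forall e : R, 0 < e -> exists N : nat, forall m n : nat,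
    (N <= m)%N -> (N <= n)%N -> `|a m - a n| < e) -> cvgn a.
Proof.
move=> H.
suff : cauchy (a @ \oo) by exact: cauchy_cvg.
suff : cauchy_ex (a @ \oo) by exact: cauchy_exP.
move=> e e0; rewrite /fmapE -ball_normE /ball_.
have [N HN] := H e e0.
exists (a N), N => // m Nm /=.
by apply: HN.
Qed.

Lemma lim_ge_ev (R : realType) (a : nat -> R) (x : R) (N : nat) :
  cvgn a -> (forall n, (N <= n)%N -> x <= a n) -> x <= limn a.
Proof.
move=> ca H; apply: limr_ge => //; exists N => // n /= Nn; exact: H.
Qed.

Lemma limn_cst (R : realType) (c : R) : limn (fun _ : nat => c) = c.
Proof. by rewrite lim_cst. Qed.

Section Anal.
Variable R : realType.

Definition clamp01 (w : R) := Num.min 1 (Num.max 0 w).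

Lemma clamp01_ge0 w : 0 <= clamp01 w.
Proof. by rewrite /clamp01 le_min ler01 le_max lexx. Qed.

Lemma clamp01_le1 w : clamp01 w <= 1.
Proof. by rewrite /clamp01 ge_min lexx. Qed.

Lemma max_lip (c x y : R) : `|Num.max c x - Num.max c y| <= `|x - y|.
Proof.
have := lexx `|x - y|; rewrite {1}ler_norml => /andP[h2 h1].
rewrite ler_norml; case: (leP c x) => hx; case: (leP c y) => hy;
rewrite ?(max_r hx) ?(max_l (ltW hx)) ?(max_r hy) ?(max_l (ltW hy)); apply/andP; split; lra.
Qed.

Lemma min_lip (c x y : R) : `|Num.min c x - Num.min c y| <= `|x - y|.
Proof.
have := lexx `|x - y|; rewrite {1}ler_norml => /andP[h2 h1].
rewrite ler_norml; case: (leP c x) => hx; case: (leP c y) => hy;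
rewrite ?(min_l hx) ?(min_r (ltW hx)) ?(min_l hy) ?(min_r (ltW hy)); apply/andP; split; lra.
Qed.

Lemma clamp01_lip a b : `|clamp01 a - clamp01 b| <= `|a - b|.
Proof. by apply: le_trans (min_lip _ _ _) _; apply: max_lip. Qed.

Lemma ln_diff_le (a b : R) : 0 < b -> b <= a -> ln a - ln b <= (a - b) / b.
Proof.
move=> b0 ba.
have a0 : 0 < a by apply: lt_le_trans ba.
rewrite -ln_div ?posrE //.
have -> : a / b = 1 + (a - b) / b by rewrite mulrBl mulfV ?gt_eqF // addrC subrK.
apply: le_ln1Dx; apply: lt_le_trans (ltrN10 R) _; apply: divr_ge0; last exact: ltW.
by rewrite subr_ge0.
Qed.

Definition Phi (r kap c0 : R) (t : R) := clamp01 (kap * (ln (Num.max t r) - c0)).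

Lemma max_facts (r ta tb : R) : 0 < r -> 0 <= tb -> tb <= ta ->
  [/\ 0 < Num.max tb r, Num.max tb r <= Num.max ta r, tb <= Num.max tb r &
      Num.max ta r - Num.max tb r <= ta - tb].
Proof.
move=> r0 tb0 tba.
case: (leP r ta) => ha; case: (leP r tb) => hb;
rewrite ?(max_l ha) ?(max_r (ltW ha)) ?(max_l hb) ?(max_r (ltW hb)); split; lra.
Qed.

Lemma Phi_lip (r kap c0 ta tb : R) : 0 < r -> 0 <= tb -> tb <= ta ->
  `|Phi r kap c0 ta - Phi r kap c0 tb| * tb <= `|kap| * (ta - tb).
Proof.
move=> r0 tb0 tba; rewrite /Phi.
have [mb0 mab tbm dm] := max_facts r0 tb0 tba.
set ma := Num.max ta r in mab dm *; set mb := Num.max tb r in mb0 mab tbm dm *.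
have ma0 : 0 < ma by apply: lt_le_trans mab.
have lnab : ln mb <= ln ma by rewrite ler_ln ?posrE.
apply: (le_trans (ler_wpM2r tb0 (clamp01_lip _ _))).
rewrite -mulrBr opprB addrA subrK normrM -mulrA ler_wpM2l //.
rewrite ger0_norm ?subr_ge0 //.
apply: (le_trans (ler_wpM2r tb0 (ln_diff_le mb0 mab))).
rewrite mulrAC ler_pdivrMr // mulrC.
have hh : 0 <= ma - mb by rewrite subr_ge0.
nra.
Qed.
End Anal.

Section Metric.
Variables (R : realType) (M : Type) (d : M -> M -> R) (base : M).
Hypothesis Hd : is_metric d.
Let dsym := d_sym Hd.
Let dtri := d_tri Hd.
Let dge0 := d_ge0 Hd.

Lemma A_lip (r kap c0 : R) (z : M) (F : M -> R) a b : 0 < r ->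
  (forall a b, `|F a - F b| <= d a b) -> (forall q, `|F q| <= d q z) ->
  `|Phi r kap c0 (d a z) * F a - Phi r kap c0 (d b z) * F b| <= (1 + `|kap|) * d a b.
Proof.
move=> r0 FL Fz.
wlog h : a b / d b z <= d a z.
  move=> W; case: (lerP (d b z) (d a z)) => h; first exact: W.
  by rewrite distrC (d_sym Hd a b); apply: W; apply: ltW.
have tb0 : 0 <= d b z by apply: dge0.
have := Phi_lip kap c0 r0 tb0 h.
set pa := Phi r kap c0 (d a z); set pb := Phi r kap c0 (d b z) => Hp.
have -> : pa * F a - pb * F b = pa * (F a - F b) + (pa - pb) * F b by ring.
apply: (le_trans (ler_normD _ _)); rewrite !normrM.
have pa0 : 0 <= pa by apply: clamp01_ge0.
have pa1 : pa <= 1 by apply: clamp01_le1.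
have h1 : `|pa| * `|F a - F b| <= d a b.
  rewrite ger0_norm //; apply: le_trans (ler_wpM2l pa0 (FL a b)) _.
  by rewrite ler_piMl ?dge0.
have h2 : `|pa - pb| * `|F b| <= `|kap| * d a b.
  apply: le_trans (ler_wpM2l (normr_ge0 _) (Fz b)) _; apply: le_trans Hp _.
  apply: ler_wpM2l; first exact: normr_ge0.
  by rewrite lerBlDr; apply: dtri.
by rewrite mulrDl mul1r; apply: lerD.
Qed.

Lemma sep_lip (A B : M -> R) (c : R) a b :
  (forall a b, `|A a - A b| <= c * d a b) -> (forall a b, `|B a - B b| <= c * d a b) ->
  (forall a b, B a != 0 -> A b != 0 -> `|A b| + `|B a| <= c * d a b) ->
  (forall q, B q != 0 -> A q = 0) ->
  `|(A a + B a) - (A b + B b)| <= c * d a b.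
Proof.
move=> HA HB HX HD.
case: (eqVneq (B a) 0) => Ba; case: (eqVneq (B b) 0) => Bb.
- by rewrite Ba Bb !addr0.
- rewrite Ba (HD _ Bb) addr0 add0r.
  case: (eqVneq (A a) 0) => Aa.
    by rewrite Aa sub0r normrN; have := HB a b; rewrite Ba sub0r normrN.
  apply: (le_trans (ler_normB _ _)); rewrite (d_sym Hd a b); exact: HX.
- rewrite Bb (HD _ Ba) addr0 add0r.
  case: (eqVneq (A b) 0) => Ab.
    by rewrite Ab subr0; have := HB a b; rewrite Bb subr0.
  rewrite distrC; apply: (le_trans (ler_normB _ _)); exact: HX.
- by rewrite !HD // !add0r.
Qed.

Lemma HL_gen (phi g : M -> R) (z : M) (del : R) : 0 <= del ->
  (phi base = 1 \/ z = base) -> g base = 0 ->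
  (forall f, adm d base f -> forall s : R, (s = 1 \/ s = -1) -> forall a b,
     `|(phi a * (f a - f z) + s * g a) - (phi b * (f b - f z) + s * g b)|
       <= (1 + del) * d a b) ->
  (forall f, adm d base f -> forall s : R, (s = 1 \/ s = -1) ->
     adm d base (fun q => (1 + del)^-1 * (phi q * f q +
        (if `[< q = base >] then 0 else 1 - phi q) * f z + s * g q))).
Proof.
move=> d0 Hb g0 H f af s s1.
have dp : 0 < 1 + del by rewrite ltr_pwDl.
have hq : forall q, phi q * f q + (if `[< q = base >] then 0 else 1 - phi q) * f z + s * g q
    = f z + (phi q * (f q - f z) + s * g q).
  move=> q; case: asboolP => [->|_] /=; last by move: (phi q) (f q) (f z) (s) (g q) => a1 a2 a3 a4 a5; ring.
  case: Hb => [pb|zb]; last by rewrite zb af.1 g0 !(mulr0, mul0r, addr0, subr0, add0r).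
  rewrite pb af.1 g0 !(mulr0, mul0r, addr0, mul1r, add0r); by rewrite subrr.
split.
  rewrite /= af.1 g0; case: asboolP => // _; by rewrite !(mulr0, mul0r, addr0).
move=> a b; rewrite -mulrBr normrM gtr0_norm ?invr_gt0 // hq hq.
rewrite opprD addrACA subrr add0r ler_pdivrMl //; exact: H.
Qed.
End Metric.

Section PhiFacts.
Variable R : realType.

Lemma clamp01_0 (w : R) : w <= 0 -> clamp01 w = 0.
Proof. by move=> w0; rewrite /clamp01 (max_l w0) (min_r ler01). Qed.

Lemma clamp01_1 (w : R) : 1 <= w -> clamp01 w = 1.
Proof. by move=> w1; rewrite /clamp01 (max_r (le_trans ler01 w1)) (min_l w1). Qed.

Lemma ln_rexp (r del : R) : 0 < r -> ln (r * expR del^-1) = ln r + del^-1.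
Proof. by move=> r0; rewrite lnM ?posrE ?expR_gt0 // expRK. Qed.

Lemma rexp_ge (r del : R) : 0 < r -> 0 < del -> r <= r * expR del^-1.
Proof.
move=> r0 d0; rewrite ler_peMr ?(ltW r0) //.
by rewrite -expR0 ler_expR invr_ge0 ltW.
Qed.

Lemma PhiU_low (r del t : R) : 0 < r -> 0 < del -> t <= r ->
  Phi r (- del) (ln (r * expR del^-1)) t = 1.
Proof.
move=> r0 d0 tr; rewrite /Phi (max_r tr) ln_rexp //.
apply: clamp01_1; rewrite opprD addrA subrr add0r mulrN mulNr opprK mulfV ?gt_eqF //.
Qed.

Lemma PhiU_high (r del t : R) : 0 < r -> 0 < del -> r * expR del^-1 <= t ->
  Phi r (- del) (ln (r * expR del^-1)) t = 0.
Proof.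
move=> r0 d0 Rt; have rt : r <= t := le_trans (rexp_ge r0 d0) Rt.
rewrite /Phi (max_l rt); apply: clamp01_0.
rewrite mulNr oppr_le0; apply: mulr_ge0; first exact: ltW.
rewrite subr_ge0 ler_ln ?posrE //; first by rewrite mulr_gt0 ?expR_gt0.
by apply: lt_le_trans Rt; rewrite mulr_gt0 ?expR_gt0.
Qed.

Lemma PhiD_low (r del t : R) : 0 < r -> t <= r -> Phi r del (ln r) t = 0.
Proof. by move=> r0 tr; rewrite /Phi (max_r tr) subrr mulr0; apply: clamp01_0. Qed.

Lemma PhiD_high (r del t : R) : 0 < r -> 0 < del -> r * expR del^-1 <= t ->
  Phi r del (ln r) t = 1.
Proof.
move=> r0 d0 Rt; have rt : r <= t := le_trans (rexp_ge r0 d0) Rt.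
have R0 : 0 < r * expR del^-1 by rewrite mulr_gt0 ?expR_gt0.
rewrite /Phi (max_l rt); apply: clamp01_1.
have : ln (r * expR del^-1) <= ln t by rewrite ler_ln ?posrE //; apply: lt_le_trans Rt.
rewrite ln_rexp // => h.
have : del * del^-1 <= del * (ln t - ln r).
  nra.
by rewrite mulfV ?gt_eqF.
Qed.
End PhiFacts.

Section Lists.
Variables (R : realType) (M : Type) (d : M -> M -> R).
Hypothesis Hd : is_metric d.

Lemma d_pos x y : x <> y -> 0 < d x y.
Proof. by move=> xy; rewrite lt_def d_ge0 // andbT; apply/eqP => /(d_eq0 Hd). Qed.

Lemma list_bound (L : seq M) c : exists D : R, 0 < D /\ forall s, List.In s L -> d s c <= D.
Proof.
elim: L => [|a L [D [D0 HD]]]; first by exists 1.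
exists (Num.max D (d a c)); split; first by rewrite lt_max D0.
move=> s [<-|sL]; first by rewrite le_max lexx orbT.
by rewrite le_max HD.
Qed.

Lemma list_sep_pt (L : seq M) a : exists s : R, 0 < s /\
  forall b, List.In b L -> b <> a -> s <= d a b.
Proof.
elim: L => [|b L [s [s0 Hs]]]; first by exists 1.
case: (asboolP (b = a)) => [ba|ba].
  by exists s; split=> // c [<-|cL] ca; [exfalso; apply: ca | apply: Hs].
exists (Num.min s (d a b)); split; first by rewrite lt_min s0 d_pos //; move=> E; apply: ba.
move=> c [<-|cL] ca; first by rewrite ge_min lexx orbT.
by rewrite ge_min Hs.
Qed.

Lemma list_sep (L : seq M) : exists s : R, 0 < s /\
  forall a b, List.In a L -> List.In b L -> a <> b -> s <= d a b.
Proof.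
elim: L => [|a L [s [s0 Hs]]]; first by exists 1.
have [sa [sa0 Ha]] := list_sep_pt L a.
exists (Num.min s sa); split; first by rewrite lt_min s0.
move=> b c [<-|bL] [<-|cL] bc //.
- by rewrite ge_min Ha ?orbT //; move=> E; apply: bc.
- by rewrite ge_min (d_sym Hd) Ha ?orbT //.
- by rewrite ge_min Hs.
Qed.

Lemma list_near (L : seq M) a x : List.In a L -> exists s, List.In s L /\
  forall b, List.In b L -> d x s <= d x b.
Proof.
move: a; elim: L => [//|b L IH] a /= aL.
have [sL|nsL] := asboolP (exists c, List.In c L).
  have [c cL] := sL; have [s [sL' Hs]] := IH c cL.
  case: (lerP (d x s) (d x b)) => h.
    by exists s; split; [right|move=> e [<-|eL]; [|apply: Hs]].
  exists b; split; first by left.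
  by move=> e [<-|eL] //; apply: le_trans (ltW h) (Hs _ eL).
exists b; split; first by left.
by move=> e [<-|eL] //; exfalso; apply: nsL; exists e.
Qed.
End Lists.

Section Cases.
Variables (R : realType) (M : Type) (d : M -> M -> R) (base : M).
Hypothesis Hd : is_metric d.
Variable X : normedModType R.

Lemma sgn_norm (s w : R) : (s = 1 \/ s = -1) -> `|s * w| = `|w|.
Proof. by case=> ->; rewrite ?mul1r ?mulN1r ?normrN. Qed.

Lemma Phi_mul_le r kap c0 t (w : R) : `|Phi r kap c0 t * w| <= `|w|.
Proof.
rewrite normrM ger0_norm ?clamp01_ge0 //.
by rewrite ler_piMl ?normr_ge0 ?clamp01_le1.
Qed.

Lemma dist_rev a b c : `|d a c - d b c| <= d a b.
Proof.
rewrite ler_norml; apply/andP; split.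
  rewrite lerNl opprB lerBlDr (d_sym Hd a b); exact: (d_tri Hd).
by rewrite lerBlDr; exact: (d_tri Hd).
Qed.

Lemma f_lip_shift f z : adm d base f ->
  (forall a b, `|(f a - f z) - (f b - f z)| <= d a b) /\
  (forall q, `|f q - f z| <= d q z).
Proof. by case=> _ fL; split=> [a b|q]; rewrite ?opprB ?addrA ?subrK ?[_ - f z + _]addrC ?addrA ?subrK. Qed.


Lemma caseU (n : nat) (u : 'I_n -> seq (M * X)) (P : M -> Prop) (e : X) (del : R) :
  0 < del -> del <= 1 -> `|e| = 1 ->
  P base -> (forall i, all (fun k => `[< P k.1 >]) (u i)) ->
  forall D : R, 0 < D -> (forall s, P s -> d s base <= D) ->
  forall x : M, 2 * (D * expR del^-1) / del + D + 1 <= d x base ->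
  forall i, proj_norm d base (u i) + (1 - del) <=
            (1 + del) * proj_norm d base (tsub (u i) (molv d x base e)).
Proof.
move=> d0 d1 e1 Pb Hu D D0 HD x Hx.
set R' := D * expR del^-1 in Hx *.
have R'0 : 0 < R' by rewrite mulr_gt0 ?expR_gt0.
have DR : D <= R' := rexp_ge D0 d0.
have xge : 2 * R' / del <= d x base by apply: le_trans Hx; rewrite -addrA lerDl; lra.
have xgR : R' <= d x base.
  apply: le_trans xge; rewrite ler_pdivlMr //.
  rewrite mulrC ler_pM2r //; apply: le_trans d1 _; by rewrite ler1n.
have A0 : 0 <= 2 * R' / del.
  by apply: divr_ge0; [apply: mulr_ge0; [lra|exact: ltW]|exact: ltW].
have nPx : ~ P x by move=> Px; have h := HD _ Px; lra.
have xb : x <> base by move=> E; apply: nPx; rewrite E.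
set phi := fun q => Phi D (- del) (ln R') (d q base).
set g := fun q => Num.max 0 (d q base - 2 * R').
have g0 : forall s, P s -> g s = 0.
  by move=> s Ps; rewrite /g max_l //; have := HD _ Ps; lra.
apply: (key_gen Hd (P := P) (phi := phi) (g := g) (z := base)) => //.
- exact: ltW.
- by move=> s Ps _; rewrite /phi PhiU_low // HD.
- by rewrite /phi PhiU_high.
- rewrite (g0 _ Pb) subr0.
  have hg : d x base - 2 * R' <= g x by rewrite /g le_max lexx orbT.
  rewrite ler_pdivrMr // in xge; lra.
apply: HL_gen => //; first exact: ltW.
  by right.
  by rewrite /g (d_xx Hd) max_l //; lra.
move=> f af s s1 a b.
have [FL Fz] := f_lip_shift base af.
apply: (sep_lip Hd (A := fun q => phi q * (f q - f base)) (B := fun q => s * g q)).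
- move=> a' b'; have := A_lip Hd (-del) (ln R') a' b' D0 FL Fz.
  by rewrite normrN (ger0_norm (ltW d0)); apply.
- move=> a' b'; rewrite -mulrBr sgn_norm //; apply: le_trans (max_lip _ _ _) _.
  have -> : (d a' base - 2 * R') - (d b' base - 2 * R') = d a' base - d b' base by ring.
  apply: le_trans (dist_rev _ _ _) _; have := d_ge0 Hd a' b'; nra.
- have gpos : forall q, s * g q != 0 -> 2 * R' < d q base /\ g q = d q base - 2 * R'.
    move=> q; case: (lerP (d q base) (2 * R')) => h.
      by rewrite /g max_l ?mulr0 ?eqxx //; lra.
    by move=> _; split=> //; rewrite /g max_r //; lra.
  have phipos : forall q, phi q * (f q - f base) != 0 -> d q base < R'.
    move=> q; case: (lerP R' (d q base)) => // h.
    by rewrite /phi PhiU_high // mul0r eqxx.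
  move=> a' b' /gpos [ha ga] /phipos hb.
  have hpos : 0 <= d a' base - 2 * R' by rewrite subr_ge0 ltW.
  rewrite (sgn_norm (g a') s1) ga (ger0_norm hpos).
  have h1 : `|phi b' * (f b' - f base)| <= d b' base.
    by apply: le_trans (Phi_mul_le _ _ _ _ _) (Fz b').
  have h2 := d_tri Hd a' b' base.
  have h3 := d_ge0 Hd a' b'.
  nra.
- move=> q; case: (lerP (d q base) (2 * R')) => h.
    by rewrite /g max_l ?mulr0 ?eqxx //; lra.
  move=> _; have hR : R' <= d q base by lra.
  by rewrite /phi PhiU_high // mul0r.
Qed.

Lemma caseD (n : nat) (u : 'I_n -> seq (M * X)) (P : M -> Prop) (e : X) (del : R) :
  0 < del -> del <= 1 -> `|e| = 1 ->
  P base -> (forall i, all (fun k => `[< P k.1 >]) (u i)) ->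
  forall x y z : M, x <> y -> ~ P x -> (P y -> y = z) ->
  (forall s, P s -> s <> z ->
     3 * (d x z + d x y) / del * expR del^-1 <= d s z) ->
  (forall s, P s -> d x y <= d s x) ->
  forall i, proj_norm d base (u i) + (1 - del) <=
            (1 + del) * proj_norm d base (tsub (u i) (molv d x y e)).
Proof.
move=> d0 d1 e1 Pb Hu x y z xy nPx Pyz H1 H2.
have [t tE] : exists t, t = d x y by exists (d x y).
rewrite -tE in H1 H2.
have t0 : 0 < t by rewrite tE; apply: d_pos.
have [r0 r0E] : exists r0, r0 = d x z + t by exists (d x z + t).
rewrite -r0E in H1.
have r00 : 0 < r0 by have := d_ge0 Hd x z; lra.
have [r rE] : exists r, r = 3 * r0 / del by exists (3 * r0 / del).
rewrite -rE in H1.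
have delr : del * r = 3 * r0 by rewrite rE [del * _]mulrC divfK ?gt_eqF.
have r0r : r0 <= r.
  have h6 : del * r0 <= r0 by rewrite ler_piMl ?(ltW r00).
  have : del * r0 <= del * r by lra.
  by rewrite ler_pM2l.
have rpos : 0 < r by lra.
set phi := fun q => Phi r del (ln r) (d q z).
set g := fun q => Num.max 0 (t - d q x).
have g0 : forall s, P s -> g s = 0.
  by move=> s Ps; rewrite /g max_l // subr_le0 H2.
have phi0 : forall q, d q z <= r -> phi q = 0 by move=> q h; rewrite /phi PhiD_low.
have dyz : d y z <= r.
  apply: le_trans (d_tri Hd y x z) _; rewrite (d_sym Hd y x); lra.
have dxz : d x z <= r by lra.
apply: (key_gen Hd (P := P) (phi := phi) (g := g) (z := z)) => //.
- exact: ltW.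
- by move=> s Ps sz; rewrite /phi PhiD_high // H1.
- exact: phi0.
- by move=> _; exact: phi0.
- by move=> _; apply: phi0; rewrite (d_xx Hd) ltW.
- rewrite /g (d_xx Hd) subr0 (max_r (ltW t0)) (d_sym Hd y x) -tE subrr (max_l (lexx 0)) subr0.
  nra.
apply: HL_gen => //; first exact: ltW.
- case: (asboolP (z = base)) => [zb|zb]; first by right.
  by left; rewrite /phi PhiD_high //; apply: H1 => // E; apply: zb; rewrite E.
- exact: g0.
move=> f af s s1 a b.
have [FL Fz] := f_lip_shift z af.
apply: (sep_lip Hd (A := fun q => phi q * (f q - f z)) (B := fun q => s * g q)).
- move=> a' b'; have := A_lip Hd del (ln r) a' b' rpos FL Fz.
  by rewrite (ger0_norm (ltW d0)); apply.
- move=> a' b'; rewrite -mulrBr sgn_norm //; apply: le_trans (max_lip _ _ _) _.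
  have -> : (t - d a' x) - (t - d b' x) = d b' x - d a' x by ring.
  apply: le_trans (dist_rev _ _ _) _; rewrite (d_sym Hd b' a'); have := d_ge0 Hd a' b'; nra.
- have gpos : forall q, s * g q != 0 -> d q x < t /\ g q = t - d q x.
    move=> q; case: (lerP t (d q x)) => h.
      by rewrite /g max_l ?mulr0 ?eqxx // subr_le0.
    by move=> _; split=> //; rewrite /g max_r // subr_ge0 ltW.
  have phipos : forall q, phi q * (f q - f z) != 0 -> r < d q z.
    move=> q; case: (lerP (d q z) r) => // h.
    by rewrite phi0 // mul0r eqxx.
  move=> a' b' /gpos [ha ga] /phipos hb.
  have hpos : 0 <= t - d a' x by rewrite subr_ge0 ltW.
  rewrite (sgn_norm (g a') s1) ga (ger0_norm hpos).
  have h1 : `|phi b' * (f b' - f z)| <= d b' z.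
    by apply: le_trans (Phi_mul_le _ _ _ _ _) (Fz b').
  have h2 := d_tri Hd b' a' z.
  have h3 := d_tri Hd a' x z.
  have h4 := d_ge0 Hd a' x.
  have h5 : 3 * r0 <= del * d b' z by rewrite -delr ler_pM2l // ltW.
  rewrite (d_sym Hd b' a') in h2.
  have h6 : del * r0 <= r0 by rewrite ler_piMl ?(ltW r00).
  have h7 : 0 <= d a' b' by apply: d_ge0.
  have h8 : 0 <= d b' z - r0 by lra.
  have h9 : d b' z - r0 <= d a' b' by lra.
  have h10 : del * (d b' z - r0) <= del * d a' b' by rewrite ler_pM2l.
  nra.
- move=> q; case: (lerP t (d q x)) => h.
    by rewrite /g max_l ?mulr0 ?eqxx // subr_le0.
  move=> _; rewrite phi0 ?mul0r //.
  apply: le_trans (d_tri Hd q x z) _; lra.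
Qed.
End Cases.

Lemma cvg_ev (R : realType) (a : nat -> R) l : a @ \oo --> l ->
  forall e : R, 0 < e -> exists N : nat, forall n, (N <= n)%N -> `|l - a n| < e.
Proof.
move=> /cvgrPdist_lt H e e0. have := H e e0. move=> [N _ HN]. exists N => n Nn. exact: HN.
Qed.

Lemma unif_N (I : finType) (Q : I -> nat -> Prop) :
  (forall i, exists N, forall m, (N <= m)%N -> Q i m) ->
  exists N, forall i m, (N <= m)%N -> Q i m.
Proof.
move=> H.
suff : forall s : seq I, exists N, forall i, i \in s -> forall m, (N <= m)%N -> Q i m.
  by move=> /(_ (enum I)) [N HN]; exists N => i m Nm; apply: HN => //; rewrite mem_enum.
elim=> [|j s [N HN]]; first by exists 0%N.
have [Nj HNj] := H j.
exists (maxn N Nj) => i; rewrite inE => /orP[/eqP ->|iS] m Nm.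
  by apply: HNj; apply: leq_trans Nm; apply: leq_maxr.
by apply: HN => //; apply: leq_trans Nm; apply: leq_maxl.
Qed.

Section Compl.
Variables (R : realType) (M : Type) (d : M -> M -> R) (base : M).
Hypothesis Hd : is_metric d.
Variable X : normedModType R.
Local Notation pn := (@proj_norm R M d base X).

Lemma pn_cvg (x : nat -> seq (M * X)) (v : seq (M * X)) :
  cauchy_seq (@tsub M X) pn x -> cvgn (fun m => pn (tsub (x m) v)).
Proof.
move=> cx; apply: real_cauchy_cvg => e e0.
have [N HN] := cx e e0; exists N => m k Nm Nk.
apply: le_lt_trans (HN _ _ Nm Nk).
have h1 := pn_tri base Hd (x m) (x k) v.
have h2 := pn_tri base Hd (x k) (x m) v.
rewrite (pn_subC base Hd (x k) (x m)) in h2.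
rewrite ler_norml; apply/andP; split; lra.
Qed.

Lemma completion :
  (forall (n : nat) (u : 'I_n -> seq (M * X)) (del : R), 0 < del -> del <= 1 ->
     exists v, pn v = 1 /\ forall i, pn (u i) + (1 - del) <= (1 + del) * pn (tsub (u i) v)) ->
  octahedral_free_ptensor d base X.
Proof.
move=> W n x Hx eps eps0.
set eta := Num.min eps 1 / 8.
have eta0 : 0 < eta by rewrite divr_gt0 // lt_min eps0 ltr01.
have eta1 : eta <= 1 by rewrite ler_pdivrMr // mul1r ge_min; apply/orP; right; rewrite ler1n.
have etae : 8 * eta <= eps by rewrite mulrC divfK // ge_min lexx.
have [N HN] : exists N, forall i m, (N <= m)%N ->
    (forall k, (m <= k)%N -> pn (tsub (x i m) (x i k)) < eta) /\ 1 - eta <= pn (x i m).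
  apply: (unif_N (Q := fun i m => (forall k, (m <= k)%N -> pn (tsub (x i m) (x i k)) < eta) /\ 1 - eta <= pn (x i m))).
  move=> i; have [cx nx] := Hx i.
  have [N1 HN1] := cx eta eta0.
  have cn : cvgn (fun m => pn (x i m)).
    apply: real_cauchy_cvg => e e0; have [N2 HN2] := cx e e0; exists N2 => m k Nm Nk.
    exact: le_lt_trans (pn_absdiff base Hd _ _) (HN2 _ _ Nm Nk).
  have : (fun m => pn (x i m)) @ \oo --> (1 : R).
    rewrite -nx; exact: cn.
  move=> /cvg_ev /(_ eta eta0) [N2 HN2].
  exists (maxn N1 N2) => m Nm; split.
    move=> k mk; apply: HN1; first by apply: leq_trans Nm; apply: leq_maxl.
    by apply: leq_trans mk; apply: leq_trans Nm; apply: leq_maxl.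
  have := HN2 m (leq_trans (leq_maxr _ _) Nm); rewrite ltr_norml => /andP[_ h]; lra.
have [v [v1 Hv]] := W n (fun i => x i N) eta eta0 eta1.
exists (fun _ => v); split.
- by move=> e e0; exists 0%N => m k _ _; rewrite pn_self.
- by rewrite /cnorm limn_cst.
move=> i; rewrite /cdist.
apply: (@lim_ge_ev _ _ _ N); first exact: pn_cvg (Hx i).1.
move=> m Nm.
have [HNa HNb] := HN i N (leqnn N).
have h1 := HNa m Nm.
have h2 := Hv i; rewrite /= in h2.
have h3 := pn_tri base Hd (x i N) (x i m) v.
set am := pn (tsub (x i m) v) in h3 *.
set aN := pn (tsub (x i N) v) in h2 h3.
have h4 : (1 + eta) * aN <= (1 + eta) * (eta + am).
  rewrite ler_pM2l; first lra.
  lra.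
have h5 : 2 - 8 * eta <= am.
  rewrite -(@ler_pM2l _ (1 + eta)); last lra.
  nra.
lra.
Qed.
End Compl.

Lemma In_map (A B : Type) (f : A -> B) (s : seq A) a : List.In a s -> List.In (f a) (map f s).
Proof. by elim: s => [//|b s IH] /= [->|aS]; [left|right; apply: IH]. Qed.

Lemma In_flatten (A : Type) (ss : seq (seq A)) s a :
  List.In a s -> List.In s ss -> List.In a (flatten ss).
Proof.
elim: ss => [//|s' ss IH] /= ain [E|sss]; apply: List.in_or_app.
  by left; rewrite E.
by right; apply: IH.
Qed.

Lemma In_mem (T : eqType) (s : seq T) a : a \in s -> List.In a s.
Proof. by elim: s => [//|b s IH]; rewrite inE => /orP[/eqP ->|aS]; [left|right; apply: IH]. Qed.

Lemma all_In (A : Type) (Q : A -> Prop) (s : seq A) :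
  (forall k, List.In k s -> Q k) -> all (fun k => `[< Q k >]) s.
Proof.
elim: s => [//|k s IH] H /=; apply/andP; split.
  by apply/asboolP; apply: H; left.
by apply: IH => k' k's; apply: H; right.
Qed.

Section Witness.
Variables (R : realType) (M : Type) (d : M -> M -> R) (base : M).
Hypothesis Hd : is_metric d.
Variable X : normedModType R.
Local Notation pn := (@proj_norm R M d base X).

Lemma witness (n : nat) (u : 'I_n -> seq (M * X)) (e : X) (del : R) :
  ~ (bounded_metric d /\ uniformly_discrete d) -> `|e| = 1 ->
  0 < del -> del <= 1 ->
  exists v, pn v = 1 /\ forall i, pn (u i) + (1 - del) <= (1 + del) * pn (tsub (u i) v).
Proof.
move=> Hnb e1 d0 d1.
set L := base :: flatten [seq [seq k.1 | k <- u i] | i <- enum 'I_n].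
set P := fun s => List.In s L.
have Pb : P base by left.
have Hu : forall i, all (fun k => `[< P k.1 >]) (u i).
  move=> i; apply: all_In => k ki; right.
  apply: (In_flatten (s := [seq k.1 | k <- u i])); first exact: In_map.
  by apply: (@In_map _ _ (fun i => [seq k.1 | k <- u i])); apply: In_mem; rewrite mem_enum.
case: (asboolP (bounded_metric d)) => hb.
  have nud : forall t0, 0 < t0 -> exists a b, a <> b /\ d a b < t0.
    move=> t0 t00; apply: contrapT => H; apply: Hnb; split => //; exists t0; split => // a b ab.
    by rewrite leNgt; apply/negP => h; apply: H; exists a, b.
  have [K KE] : exists K, K = 3 / del * expR del^-1 by eexists.
  have K3 : 3 <= K.
    have h1 : 1 <= expR del^-1.
      apply: le_trans (expR_ge1Dx _); rewrite lerDl invr_ge0; lra.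
    have h2 : 3 <= 3 / del by rewrite ler_pdivlMr //; lra.
    rewrite KE; nra.
  have [sg [sg0 Hsg]] := list_sep Hd L.
  have [t0 t0E] : exists t0, t0 = sg / (K * (K + 1)) by eexists.
  have KK0 : 0 < K * (K + 1) by apply: mulr_gt0; lra.
  have t00 : 0 < t0 by rewrite t0E divr_gt0.
  have Kt0 : K * (K + 1) * t0 = sg by rewrite t0E mulrC divfK ?gt_eqF.
  have [a [b [ab dab]]] := nud t0 t00.
  have [w [w' [ww' [nPw dww']]]] : exists w w', w <> w' /\ ~ P w /\ d w w' < t0.
    case: (asboolP (P a)) => Pa; last by exists a, b.
    case: (asboolP (P b)) => Pb'; last by exists b, a; rewrite (d_sym Hd); split=> // E; apply: ab.
    exfalso; have := Hsg _ _ Pa Pb' ab; nra.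
  have [sw [Psw Hsw]] := list_near d w Pb.
  have [y [wy [t0y ty]]] : exists y, w <> y /\ d w y < t0 /\ d w y <= d w sw.
    case: (lerP (d w w') (d w sw)) => h; first by exists w'.
    exists sw; split; first by move=> E; apply: nPw; rewrite E.
    by split; [apply: lt_trans dww'|].
  have tpos : 0 < d w y := d_pos Hd wy.
  have Hy : forall s, P s -> d w y <= d s w.
    by move=> s Ps; rewrite (d_sym Hd s w); apply: le_trans ty (Hsw _ Ps).
  exists (molv d w y e); split; first exact: molv_norm.
  case: (lerP (K * d w y) (d w sw)) => far.
    move=> i; apply: (caseD Hd (P := P) d0 d1 e1 Pb Hu wy nPw (z := w)) => //.
    - move=> Py; exfalso; have := Hsw _ Py; nra.
    - move=> s Ps _; rewrite (d_xx Hd) add0r.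
      have -> : 3 * d w y / del * expR del^-1 = K * d w y by rewrite KE; ring.
      by apply: le_trans far _; rewrite (d_sym Hd s w); apply: Hsw.
  move=> i; apply: (caseD Hd (P := P) d0 d1 e1 Pb Hu wy nPw (z := sw)) => //.
  - move=> Py; apply: contrapT => ysw.
    have h1 := Hsg _ _ Py Psw ysw.
    have h2 := d_tri Hd y w sw; rewrite (d_sym Hd y w) in h2.
    nra.
  - move=> s Ps ssw.
    have h1 := Hsg _ _ Ps Psw ssw.
    have -> : 3 * (d w sw + d w y) / del * expR del^-1 = K * (d w sw + d w y).
      by rewrite KE; ring.
    nra.
have unb : forall K, exists x, K < d x base.
  move=> K; apply: contrapT => H; apply: hb; exists (K + K) => a b.
  have ha : d a base <= K by rewrite leNgt; apply/negP => h; apply: H; exists a.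
  have hb' : d b base <= K by rewrite leNgt; apply/negP => h; apply: H; exists b.
  apply: le_trans (d_tri Hd a base b) _; rewrite (d_sym Hd base b); lra.
have [D [D0 HD]] := list_bound d L base.
have [x Hx] := unb (2 * (D * expR del^-1) / del + D + 1).
have A0 : 0 <= 2 * (D * expR del^-1) / del.
  by apply: divr_ge0; [apply: mulr_ge0; [lra|apply: mulr_ge0; [lra|apply: expR_ge0]]|lra].
have xb : x <> base by move=> E; move: Hx; rewrite E (d_xx Hd); lra.
exists (molv d x base e); split; first exact: molv_norm.
by move=> i; apply: (caseU Hd (P := P) d0 d1 e1 Pb Hu D0 HD (ltW Hx)).
Qed.
End Witness.


Theorem theorem1p2 (R : realType) (M : Type) (d : M -> M -> R) (base : M) :
  is_metric d ->
  ~ (bounded_metric d /\ uniformly_discrete d) ->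
  forall X : completeNormedModType R, (exists x : X, x != 0) ->
  octahedral_free_ptensor d base X.
Proof.
move=> Hd Hnb X [x0 x0ne].
have e1 : `|((`|x0|)^-1 *: x0)| = 1.
  by rewrite normrZ normfV normr_id mulVf // normr_eq0.
apply: (completion Hd) => n u del d0 d1.
exact: (witness base Hd u Hnb e1 d0 d1).
Qed.
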